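(* Let $n,m\in\mathbb{N}$ and $g\in C^2[0,1]$. With $I_{n,m}(g)=\frac{1}{m(n+1)}\sum_{k=1}^m\sum_{i=0}^n g\left(\frac{kn-n+i}{mn}\right)$, $$ \left|\int_0^1g(x)\,dx-I_{n,m}(g)\right|\le\frac{1}{12m^2n}\|g''\|_\infty. $$
   Context: $I_{n,m}(g)$ equals $\int_0^1\overline{B}_{n,m}(g;x)\,dx$, where $\overline{B}_{n,m}(g;x)=B_n^{[\frac{k-1}{m},\frac km]}(g;x)$ on $\left[\frac{k-1}{m},\frac km\right]$ and $B_n^{[a,b]}(g;x)=\frac{1}{(b-a)^n}\sum_{i=0}^n\binom ni(x-a)^i(b-x)^{n-i}g(a+i\frac{b-a}{n})$. $\|\cdot\|_\infty$ is the sup norm on $[0,1]$. *)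

(* Defs.v *)
From Stdlib Require Import Reals.
From Coquelicot Require Import Coquelicot.
Open Scope R_scope.

Definition has_deriv_on01 (f f' : R -> R) : Prop :=
  forall x, 0 <= x <= 1 ->
    forall eps, 0 < eps -> exists delta, 0 < delta /\
      forall y, 0 <= y <= 1 -> Rabs (y - x) < delta ->
        Rabs (f y - f x - f' x * (y - x)) <= eps * Rabs (y - x).

Definition continuous_on01 (f : R -> R) : Prop :=
  forall x, 0 <= x <= 1 ->
    forall eps, 0 < eps -> exists delta, 0 < delta /\
      forall y, 0 <= y <= 1 -> Rabs (y - x) < delta -> Rabs (f y - f x) < eps.

Definition C2_on01 (g g1 g2 : R -> R) : Prop :=
  has_deriv_on01 g g1 /\ has_deriv_on01 g1 g2 /\ continuous_on01 g2.

Definition sup_norm01 (f : R -> R) : R :=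
  real (Lub_Rbar (fun y => exists x, 0 <= x <= 1 /\ y = Rabs (f x))).

Definition I_nm (n m : nat) (g : R -> R) : R :=
  / (INR m * (INR n + 1)) *
  sum_n_m (fun k : nat =>
     sum_n_m (fun i : nat =>
        g ((INR k * INR n - INR n + INR i) / (INR m * INR n))) 0 n) 1 m.

(* Main.v *)
Require Import Defs.
From Stdlib Require Import Reals Lra Lia Psatz.
From Coquelicot Require Import Coquelicot.
Open Scope R_scope.

Definition clamp (x : R) : R := Rmax 0 (Rmin 1 x).

Lemma clamp_id x : 0 <= x <= 1 -> clamp x = x.
Proof. intros H; unfold clamp, Rmax, Rmin; repeat destruct Rle_dec; lra. Qed.

Lemma clamp_in x : 0 <= clamp x <= 1.
Proof. unfold clamp, Rmax, Rmin; repeat destruct Rle_dec; lra. Qed.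

Lemma clamp_lip x y : Rabs (clamp y - clamp x) <= Rabs (y - x).
Proof. unfold clamp, Rmax, Rmin; repeat destruct Rle_dec; unfold Rabs; repeat destruct Rcase_abs; lra. Qed.

Lemma deriv_cont f f' : has_deriv_on01 f f' -> continuous_on01 f.
Proof.
  intros H x Hx eps Heps.
  destruct (H x Hx 1 Rlt_0_1) as [d [Hd Hy]].
  exists (Rmin d (eps / (Rabs (f' x) + 2))).
  split.
  { apply Rmin_pos; auto. apply Rdiv_lt_0_compat; auto. pose proof (Rabs_pos (f' x)); lra. }
  intros y Hy01 Hyx.
  pose proof (Rmin_l d (eps / (Rabs (f' x) + 2))) as H1.
  pose proof (Rmin_r d (eps / (Rabs (f' x) + 2))) as H2.
  specialize (Hy y Hy01 ltac:(lra)).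
  pose proof (Rabs_pos (f' x)).
  assert (Hb : Rabs (y - x) * (Rabs (f' x) + 2) < eps).
  { apply Rmult_lt_reg_r with (/ (Rabs (f' x) + 2)).
    apply Rinv_0_lt_compat; lra.
    rewrite Rmult_assoc, Rinv_r by lra. rewrite Rmult_1_r. unfold Rdiv in H2. lra. }
  assert (H4 : Rabs (f y - f x) <= Rabs (f y - f x - f' x * (y - x)) + Rabs (f' x * (y - x))).
  { replace (f y - f x) with ((f y - f x - f' x * (y - x)) + f' x * (y - x)) at 1 by ring.
    apply Rabs_triang. }
  rewrite Rabs_mult in H4. pose proof (Rabs_pos (y - x)). nra.
Qed.

Lemma cont_clamp f : continuous_on01 f -> forall x, continuity_pt (fun t => f (clamp t)) x.
Proof.
  intros H x. unfold continuity_pt, continue_in, limit1_in, limit_in. intros eps Heps.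
  destruct (H (clamp x) (clamp_in x) eps Heps) as [d [Hd Hy]].
  exists d. split; auto. intros y [_ Hyx]. simpl in *. unfold R_dist in *.
  apply Hy. apply clamp_in. pose proof (clamp_lip x y). lra.
Qed.

Lemma cont_clamp' f : continuous_on01 f -> forall x, continuous (fun t => f (clamp t)) x.
Proof. intros H x. apply continuity_pt_filterlim. apply cont_clamp; auto. Qed.

Lemma deriv_interior F F' x : has_deriv_on01 F F' -> 0 < x < 1 ->
  is_derive (fun t => F (clamp t)) x (F' x).
Proof.
  intros H Hx. apply is_derive_Reals. intros eps Heps.
  destruct (H x ltac:(lra) (eps/2) ltac:(lra)) as [d [Hd Hy]].
  assert (Hdp : 0 < Rmin d (Rmin x (1 - x))).
  { repeat apply Rmin_pos; lra. }
  exists (mkposreal _ Hdp). intros h Hh0 Hh. simpl in Hh.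
  pose proof (Rmin_l d (Rmin x (1 - x))). pose proof (Rmin_r d (Rmin x (1 - x))).
  pose proof (Rmin_l x (1 - x)). pose proof (Rmin_r x (1 - x)).
  assert (Hin : 0 <= x + h <= 1) by (unfold Rabs in Hh; destruct Rcase_abs; lra).
  rewrite !clamp_id by (auto; lra).
  specialize (Hy (x + h) Hin ltac:(replace (x + h - x) with h by ring; lra)).
  replace (x + h - x) with h in Hy by ring.
  replace ((F (x + h) - F x) / h - F' x) with ((F (x + h) - F x - F' x * h) / h) by (field; auto).
  unfold Rdiv. rewrite Rabs_mult, Rabs_inv.
  assert (0 < Rabs h) by (apply Rabs_pos_lt; auto).
  apply Rle_lt_trans with (eps / 2 * Rabs h * / Rabs h).
  apply Rmult_le_compat_r; [left; apply Rinv_0_lt_compat; auto | auto].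
  field_simplify; lra.
Qed.

Lemma MVT01 F F' a b : has_deriv_on01 F F' -> 0 <= a <= b -> b <= 1 ->
  exists c, a <= c <= b /\ F b - F a = F' c * (b - a).
Proof.
  intros H Hab Hb.
  destruct (MVT_gen (fun t => F (clamp t)) a b F') as [c [Hc Heq]].
  - intros x Hx. rewrite Rmin_left, Rmax_right in Hx by lra. apply deriv_interior; auto; lra.
  - intros x _. apply cont_clamp. eapply deriv_cont; eauto.
  - rewrite Rmin_left, Rmax_right in Hc by lra. exists c. split; auto.
    rewrite !clamp_id in Heq by lra. auto.
Qed.


Lemma deriv_lin A A' B B' al be : has_deriv_on01 A A' -> has_deriv_on01 B B' ->
  has_deriv_on01 (fun x => al * A x + be * B x) (fun x => al * A' x + be * B' x).
Proof.
  intros HA HB x Hx eps Heps.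
  set (K := Rabs al + Rabs be + 1).
  assert (HK : 0 < K) by (unfold K; pose proof (Rabs_pos al); pose proof (Rabs_pos be); lra).
  destruct (HA x Hx (eps / K) ltac:(apply Rdiv_lt_0_compat; auto)) as [d1 [Hd1 H1]].
  destruct (HB x Hx (eps / K) ltac:(apply Rdiv_lt_0_compat; auto)) as [d2 [Hd2 H2]].
  exists (Rmin d1 d2). split. apply Rmin_pos; auto.
  intros y Hy Hyx.
  pose proof (Rmin_l d1 d2). pose proof (Rmin_r d1 d2).
  specialize (H1 y Hy ltac:(lra)). specialize (H2 y Hy ltac:(lra)).
  replace (al * A y + be * B y - (al * A x + be * B x) - (al * A' x + be * B' x) * (y - x))
    with (al * (A y - A x - A' x * (y - x)) + be * (B y - B x - B' x * (y - x))) by ring.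
  eapply Rle_trans. apply Rabs_triang. rewrite !Rabs_mult.
  pose proof (Rabs_pos al); pose proof (Rabs_pos be); pose proof (Rabs_pos (y - x)).
  assert (E : eps / K * K = eps) by (unfold Rdiv; rewrite Rmult_assoc, Rinv_l by lra; ring).
  assert (eps / K * Rabs (y - x) * K = eps * Rabs (y-x)) by (field; lra).
  apply Rle_trans with (Rabs al * (eps/K*Rabs(y-x)) + Rabs be * (eps/K*Rabs(y-x))).
  apply Rplus_le_compat; apply Rmult_le_compat_l; auto.
  assert (0 <= eps / K * Rabs (y - x)) by (apply Rmult_le_pos; [left; apply Rdiv_lt_0_compat|]; auto).
  unfold K in *. nra.
Qed.

Lemma deriv_id : has_deriv_on01 (fun x => x) (fun _ => 1).
Proof.
  intros x Hx eps Heps. exists 1. split. lra. intros y _ _.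
  replace (y - x - 1 * (y - x)) with 0 by ring. rewrite Rabs_R0.
  pose proof (Rabs_pos (y - x)). nra.
Qed.

Lemma deriv_sq : has_deriv_on01 (fun x => x * x / 2) (fun x => x).
Proof.
  intros x Hx eps Heps. exists eps. split. lra. intros y _ Hyx.
  replace (y * y / 2 - x * x / 2 - x * (y - x)) with ((y - x) * (y - x) / 2) by field.
  unfold Rdiv. rewrite !Rabs_mult. rewrite (Rabs_right (/2)) by lra.
  pose proof (Rabs_pos (y - x)). nra.
Qed.

Lemma mono01 F F' a b : has_deriv_on01 F F' -> (forall x, 0 <= x <= 1 -> 0 <= F' x) ->
  0 <= a <= b -> b <= 1 -> F a <= F b.
Proof.
  intros H Hp Hab Hb. destruct (MVT01 F F' a b H Hab Hb) as [c [Hc E]].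
  specialize (Hp c ltac:(lra)). nra.
Qed.

Lemma convex01 f f' f'' u w v : has_deriv_on01 f f' -> has_deriv_on01 f' f'' ->
  (forall x, 0 <= x <= 1 -> 0 <= f'' x) -> 0 <= u -> u <= w -> w <= v -> v <= 1 ->
  (v - u) * f w <= (v - w) * f u + (w - u) * f v.
Proof.
  intros H1 H2 Hp Hu Huw Hwv Hv.
  destruct (MVT01 f f' u w H1 ltac:(lra) ltac:(lra)) as [c1 [Hc1 E1]].
  destruct (MVT01 f f' w v H1 ltac:(lra) ltac:(lra)) as [c2 [Hc2 E2]].
  assert (f' c1 <= f' c2) by (apply (mono01 f' f''); auto; lra).
  assert (0 <= (v - w) * (w - u)) by nra.
  nra.
Qed.

Lemma interp01 g g1 g2 M u w v : C2_on01 g g1 g2 ->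
  (forall x, 0 <= x <= 1 -> Rabs (g2 x) <= M) -> 0 <= u -> u <= w -> w <= v -> v <= 1 ->
  Rabs ((v - u) * g w - ((v - w) * g u + (w - u) * g v)) <= M * (w - u) * (v - w) * (v - u) / 2.
Proof.
  intros [H1 [H2 _]] HM Hu Huw Hwv Hv.
  assert (key : forall s, s = 1 \/ s = -1 ->
    s * ((v - u) * g w - ((v - w) * g u + (w - u) * g v)) <= M * (w - u) * (v - w) * (v - u) / 2).
  { intros s Hs.
    assert (D1 := deriv_lin _ _ _ _ M s deriv_sq H1).
    assert (D2 := deriv_lin _ _ _ _ M s deriv_id H2).
    assert (C := convex01 _ _ _ u w v D1 D2).
    simpl in C.
    assert (Hp : forall x, 0 <= x <= 1 -> 0 <= M * 1 + s * g2 x).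
    { intros x Hx. specialize (HM x Hx). destruct Hs; subst; unfold Rabs in HM; destruct Rcase_abs; lra. }
    specialize (C Hp Hu Huw Hwv Hv). destruct Hs; subst; ring_simplify in C; ring_simplify; lra. }
  unfold Rabs; destruct Rcase_abs.
  - specialize (key (-1) ltac:(right; reflexivity)). lra.
  - specialize (key 1 ltac:(left; reflexivity)). lra.
Qed.


Lemma is_RInt_lin (p q u v : R) : u < v ->
  is_RInt (fun w => ((v - w) * p + (w - u) * q) / (v - u)) u v ((v - u) * (p + q) / 2).
Proof.
  intros Huv.
  set (F := fun w => (- ((v - w) * (v - w)) / 2 * p + (w - u) * (w - u) / 2 * q) / (v - u)).
  replace ((v - u) * (p + q) / 2) with (minus (F v) (F u)).
  2:{ unfold F, minus, plus, opp; simpl. field. lra. }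
  apply (@is_RInt_derive R_CompleteNormedModule F).
  - intros x _. unfold F. auto_derive. lra. field. lra.
  - intros x _. apply (@ex_derive_continuous R_AbsRing R_NormedModule). auto_derive. lra.
Qed.

Lemma is_RInt_bump (M u v : R) : u <= v ->
  is_RInt (fun w => M * (w - u) * (v - w) / 2) u v (M * (v - u) ^ 3 / 12).
Proof.
  intros Huv.
  set (F := fun w => M / 2 * (- (w * w * w) / 3 + (u + v) * (w * w) / 2 - u * v * w)).
  replace (M * (v - u) ^ 3 / 12) with (minus (F v) (F u)).
  2:{ unfold F, minus, plus, opp; simpl. field. }
  apply (@is_RInt_derive R_CompleteNormedModule F).
  - intros x _. unfold F. auto_derive. auto. field.
  - intros x _. apply (@ex_derive_continuous R_AbsRing R_NormedModule). auto_derive. auto.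
Qed.

Lemma exG g g1 g2 a b : C2_on01 g g1 g2 -> ex_RInt (fun t => g (clamp t)) a b.
Proof.
  intros [H1 _]. apply (@ex_RInt_continuous R_CompleteNormedModule). intros z _. apply cont_clamp'. eapply deriv_cont; eauto.
Qed.

Lemma trap g g1 g2 M u v : C2_on01 g g1 g2 ->
  (forall x, 0 <= x <= 1 -> Rabs (g2 x) <= M) -> 0 <= u -> u <= v -> v <= 1 ->
  Rabs (RInt (fun t => g (clamp t)) u v - (v - u) * (g u + g v) / 2) <= M * (v - u) ^ 3 / 12.
Proof.
  intros HC HM Hu Huv Hv.
  destruct (Req_dec u v) as [E|Hne].
  { subst. replace (RInt (fun t => g (clamp t)) v v) with 0 by (rewrite RInt_point; reflexivity).
    replace (0 - (v - v) * (g v + g v) / 2) with 0 by field.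
    rewrite Rabs_R0. replace (M * (v - v) ^ 3 / 12) with 0 by field. lra. }
  assert (Huv' : u < v) by lra.
  set (G := fun t => g (clamp t)).
  set (L := fun w => ((v - w) * g u + (w - u) * g v) / (v - u)).
  set (Bf := fun w => M * (w - u) * (v - w) / 2).
  assert (HL := is_RInt_lin (g u) (g v) u v Huv').
  assert (HB := is_RInt_bump M u v Huv).
  assert (exL : ex_RInt L u v) by (eexists; exact HL).
  assert (exB : ex_RInt Bf u v) by (eexists; exact HB).
  assert (exGG : ex_RInt G u v) by (eapply exG; eauto).
  assert (RL : RInt L u v = (v - u) * (g u + g v) / 2) by (apply is_RInt_unique; exact HL).
  assert (RB : RInt Bf u v = M * (v - u) ^ 3 / 12) by (apply is_RInt_unique; exact HB).
  assert (pt : forall x, u < x < v -> Rabs (G x - L x) <= Bf x).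
  { intros x Hx. unfold G, L, Bf. rewrite clamp_id by lra.
    assert (I := interp01 g g1 g2 M u x v HC HM Hu ltac:(lra) ltac:(lra) Hv).
    replace (g x - ((v - x) * g u + (x - u) * g v) / (v - u))
      with (((v - u) * g x - ((v - x) * g u + (x - u) * g v)) / (v - u)) by (field; lra).
    unfold Rdiv at 1. rewrite Rabs_mult, Rabs_inv, (Rabs_right (v - u)) by lra.
    apply Rle_trans with (M * (x - u) * (v - x) * (v - u) / 2 * / (v - u)).
    apply Rmult_le_compat_r; [left; apply Rinv_0_lt_compat; lra| exact I].
    right; field; lra. }
  assert (I1 : RInt (fun x => minus (G x) (L x)) u v <= RInt Bf u v).
  { apply RInt_le; [lra | apply (@ex_RInt_minus R_NormedModule); assumption | exact exB |].
    intros x Hx. specialize (pt x Hx). unfold minus, plus, opp; simpl.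
    pose proof (Rle_abs (G x - L x)). unfold Rminus in *. lra. }
  assert (I2 : RInt (fun x => minus (L x) (G x)) u v <= RInt Bf u v).
  { apply RInt_le; [lra | apply (@ex_RInt_minus R_NormedModule); assumption | exact exB |].
    intros x Hx. specialize (pt x Hx). unfold minus, plus, opp; simpl.
    rewrite <- Rabs_Ropp in pt.
    pose proof (Rle_abs (- (G x - L x))). unfold Rminus in *. lra. }
  rewrite (@RInt_minus R_CompleteNormedModule) in I1, I2 by assumption.
  unfold minus, plus, opp in I1, I2; simpl in I1, I2.
  fold G. rewrite RL, RB in *.
  unfold Rabs; destruct Rcase_abs; lra.
Qed.

Ltac req := match goal with |- @eq _ ?x ?y => change (@eq R x y) end.

Lemma sumS (a : nat -> R) n : sum_n a (S n) = sum_n a n + a (S n).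
Proof. rewrite sum_Sn. reflexivity. Qed.

Lemma sum0 (a : nat -> R) : sum_n a 0 = a 0%nat.
Proof. apply sum_O. Qed.

Lemma sum_ext (a b : nat -> R) N : (forall i, (i <= N)%nat -> a i = b i) -> sum_n a N = sum_n b N.
Proof.
  induction N; intros H. rewrite !sum0; apply H; lia.
  rewrite !sumS, IHN, H; auto; intros; apply H; lia.
Qed.

Lemma sum_lin (a b : nat -> R) al be N :
  sum_n (fun i => al * a i + be * b i) N = al * sum_n a N + be * sum_n b N.
Proof. induction N. rewrite !sum0. req; ring. rewrite !sumS, IHN; req; ring. Qed.

Lemma sum_abs_le (a b : nat -> R) N : (forall i, (i <= N)%nat -> Rabs (a i) <= b i) ->
  Rabs (sum_n a N) <= sum_n b N.
Proof.
  induction N; intros H. rewrite !sum0; apply H; lia.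
  rewrite !sumS. eapply Rle_trans. apply Rabs_triang.
  apply Rplus_le_compat. apply IHN; intros; apply H; lia. apply H; lia.
Qed.

Lemma sum_const (c : R) N : sum_n (fun _ => c) N = (INR N + 1) * c.
Proof. induction N. rewrite sum0; simpl; req; ring. rewrite sumS, IHN, S_INR; req; ring. Qed.

Lemma sum_id N : sum_n INR N = INR N * (INR N + 1) / 2.
Proof. induction N. rewrite sum0; simpl; req; field. rewrite sumS, IHN, S_INR; req; field. Qed.

Lemma sum_sq N : sum_n (fun i => INR i * INR i) N = INR N * (INR N + 1) * (2 * INR N + 1) / 6.
Proof. induction N. rewrite sum0; simpl; req; field. rewrite sumS, IHN, S_INR; req; field. Qed.

Lemma sum_trap (c : nat -> R) N :
  sum_n (fun i => (c i + c (S i)) / 2) N = sum_n c (S N) - (c 0%nat + c (S N)) / 2.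
Proof.
  induction N. rewrite sum0, sumS, sum0; req; field.
  rewrite sumS, IHN, (sumS c (S N)); req; field.
Qed.

Lemma chasles (G : R -> R) a d : (forall x y, ex_RInt G x y) -> forall N,
  RInt G a (a + INR (S N) * d) = sum_n (fun j => RInt G (a + INR j * d) (a + INR (S j) * d)) N.
Proof.
  intros HG N. induction N.
  - rewrite sum0. simpl. f_equal. req; ring.
  - rewrite sumS.
    transitivity (RInt G a (a + INR (S N) * d) + RInt G (a + INR (S N) * d) (a + INR (S (S N)) * d)).
    + symmetry. apply (@RInt_Chasles R_CompleteNormedModule); auto.
    + rewrite IHN. reflexivity.
Qed.

Lemma sum_sub (a b : nat -> R) c N : sum_n a N - c * sum_n b N = sum_n (fun j => a j - c * b j) N.
Proof. induction N. rewrite !sum0; req; ring. rewrite !sumS, <- IHN; req; ring. Qed.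

Ltac fixR := repeat match goal with |- context [RInt ?f ?x ?y] =>
  let r := fresh "r" in let Hr := fresh "Hr" in
  assert (Hr : exists r : R, RInt f x y = r) by (eexists; reflexivity);
  destruct Hr as [r Hr]; rewrite Hr; clear Hr end.
Ltac fixS := repeat match goal with |- context [sum_n ?f ?x] =>
  let r := fresh "s" in let Hr := fresh "Hs" in
  assert (Hr : exists r : R, sum_n f x = r) by (eexists; reflexivity);
  destruct Hr as [r Hr]; rewrite Hr; clear Hr end.

Lemma block g g1 g2 M p a h : C2_on01 g g1 g2 ->
  (forall x, 0 <= x <= 1 -> Rabs (g2 x) <= M) -> 0 <= a -> 0 < h -> a + h <= 1 ->
  Rabs (RInt (fun t => g (clamp t)) a (a + h)
        - h / (INR (S p) + 1) * sum_n (fun i => g (a + INR i * (h / INR (S p)))) (S p))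
  <= M * h ^ 3 / (12 * INR (S p)).
Proof.
  intros HC HM Ha Hh Hah.
  set (n := INR (S p)).
  assert (Hn : n = INR p + 1) by (unfold n; rewrite S_INR; ring).
  assert (Hp0 : 0 <= INR p) by apply pos_INR.
  set (dl := h / n).
  assert (Hhd : h = n * dl) by (unfold dl; field; lra).
  assert (Hdl : 0 < dl) by (unfold dl; apply Rdiv_lt_0_compat; lra).
  set (G := fun t => g (clamp t)).
  set (c := fun i => g (a + INR i * dl)).
  fold c.
  assert (HG : forall x y, ex_RInt G x y) by (intros; eapply exG; eauto).
  assert (Hch := chasles G a dl HG p).
  replace (a + INR (S p) * dl) with (a + h) in Hch by (fold n; lra).
  set (T := fun j => RInt G (a + INR j * dl) (a + INR (S j) * dl) - dl * ((c j + c (S j)) / 2)).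
  assert (HI : RInt G a (a + h) = sum_n T p + dl * (sum_n c (S p) - (c 0%nat + c (S p)) / 2)).
  { rewrite Hch, <- sum_trap, <- (Rmult_1_l (sum_n T p)), <- sum_lin.
    apply sum_ext. intros i _. unfold T. fixR. ring. }
  set (d := fun i => 1 * ((n * dl) * c i + (dl * (c 0%nat - c (S p))) * INR i) + (- (dl * n * c 0%nat)) * 1).
  assert (Hsd : sum_n d (S p) = n * dl * sum_n c (S p) + dl * (c 0%nat - c (S p)) * (n * (n + 1) / 2)
                                 - dl * n * c 0%nat * (n + 1)).
  { unfold d. rewrite sum_lin.
    rewrite (sum_lin c INR).
    rewrite sum_const, sum_id. fold n. fixS; req. ring. }
  assert (HE : RInt G a (a + h) - h / (n + 1) * sum_n c (S p) = sum_n T p + sum_n d (S p) / (n * (n + 1))).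
  { rewrite HI, Hsd, Hhd. fixR; fixS; req. field. lra. }
  fold n. rewrite HE.
  assert (BT : Rabs (sum_n T p) <= n * (M * dl ^ 3 / 12)).
  { eapply Rle_trans. apply (sum_abs_le T (fun _ => M * dl ^ 3 / 12)).
    - intros j Hj. unfold T, c, G.
      assert (Hj' : INR (S j) <= INR p + 1) by (rewrite <- S_INR; apply le_INR; lia).
      pose proof (pos_INR j).
      assert (Hst := trap g g1 g2 M (a + INR j * dl) (a + INR (S j) * dl) HC HM).
      rewrite S_INR in *.
      replace (a + (INR j + 1) * dl - (a + INR j * dl)) with dl in Hst by ring.
      eapply Rle_trans; [|apply Hst; nra]. right. f_equal. f_equal. field.
    - rewrite sum_const, Hn. lra. }
  assert (BD : Rabs (sum_n d (S p)) <= M * dl ^ 3 * n * n * (n + 1) * (n - 1) / 12).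
  { eapply Rle_trans. apply (sum_abs_le d (fun i => (M * dl ^ 3 * n / 2 * n) * INR i
                                                  + (- (M * dl ^ 3 * n / 2)) * (INR i * INR i))).
    - intros i Hi. unfold d, c.
      assert (Hi' : INR i <= n) by (apply le_INR; lia).
      pose proof (pos_INR i).
      assert (Hin := interp01 g g1 g2 M a (a + INR i * dl) (a + h) HC HM Ha ltac:(nra) ltac:(nra) Hah).
      replace (a + INR 0 * dl) with a by (simpl; ring).
      replace (a + INR (S p) * dl) with (a + h) by (fold n; lra).
      replace (1 * (n * dl * g (a + INR i * dl) + dl * (g a - g (a + h)) * INR i) + - (dl * n * g a) * 1)
        with ((a + h - a) * g (a + INR i * dl) - ((a + h - (a + INR i * dl)) * g a + (a + INR i * dl - a) * g (a + h)))
        by (rewrite Hhd; ring).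
      eapply Rle_trans. apply Hin. right. rewrite Hhd. field.
    - rewrite sum_lin, sum_id, sum_sq. fold n. right. field. }
  assert (Hnn : 0 < n * (n + 1)) by nra.
  eapply Rle_trans. apply Rabs_triang.
  unfold Rdiv at 1. rewrite Rabs_mult, Rabs_inv, (Rabs_right (n * (n + 1))) by lra.
  apply Rle_trans with (n * (M * dl ^ 3 / 12) + M * dl ^ 3 * n * n * (n + 1) * (n - 1) / 12 * / (n * (n + 1))).
  { apply Rplus_le_compat. auto. apply Rmult_le_compat_r. left; apply Rinv_0_lt_compat; auto. auto. }
  right. rewrite Hhd. field. lra.
Qed.


Lemma supM g2 : continuous_on01 g2 -> forall x, 0 <= x <= 1 -> Rabs (g2 x) <= sup_norm01 g2.
Proof.
  intros Hc.
  assert (Ha : continuous_on01 (fun x => Rabs (g2 x))).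
  { intros x Hx eps Heps. destruct (Hc x Hx eps Heps) as [d [Hd Hy]]. exists d. split; auto.
    intros y Hy1 Hy2. eapply Rle_lt_trans. apply Rabs_triang_inv2. auto. }
  destruct (continuity_ab_maj (fun t => Rabs (g2 (clamp t))) 0 1 ltac:(lra) (fun c _ => cont_clamp _ Ha c))
    as [Mx [HMx _]].
  set (E := fun y => exists x, 0 <= x <= 1 /\ y = Rabs (g2 x)).
  destruct (Lub_Rbar_correct E) as [Hub Hlub].
  assert (Hb : Rbar_le (Lub_Rbar E) (Rabs (g2 (clamp Mx)))).
  { apply Hlub. intros y [x [Hx ->]]. simpl. specialize (HMx x Hx). simpl in HMx.
    rewrite clamp_id in HMx; auto. }
  intros x Hx.
  assert (Hx' : Rbar_le (Rabs (g2 x)) (Lub_Rbar E)) by (apply Hub; exists x; auto).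
  unfold sup_norm01. fold E.
  destruct (Lub_Rbar E) as [r| |]; simpl in *; try contradiction. auto.
Qed.


Theorem mainTheorem5 (n m : nat) (g g1 g2 : R -> R) :
  (1 <= n)%nat -> (1 <= m)%nat ->
  C2_on01 g g1 g2 ->
  Rabs (RInt g 0 1 - I_nm n m g)
    <= / (12 * (INR m) ^ 2 * INR n) * sup_norm01 g2.
Proof.
  intros Hn Hm HC.
  set (M := sup_norm01 g2).
  assert (HM : forall x, 0 <= x <= 1 -> Rabs (g2 x) <= M).
  { apply supM. destruct HC as [_ [_ H]]; exact H. }
  destruct n as [|p]; [lia|]. destruct m as [|q]; [lia|].
  set (G := fun t => g (clamp t)).
  assert (HG : forall x y, ex_RInt G x y) by (intros; eapply exG; eauto).
  assert (Ri : RInt g 0 1 = RInt G 0 1).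
  { apply RInt_ext. intros x Hx. rewrite Rmin_left, Rmax_right in Hx by lra.
    unfold G. rewrite clamp_id; auto; lra. }
  rewrite Ri.
  set (mm := INR (S q)). set (nn := INR (S p)).
  assert (Hmm : mm = INR q + 1) by (unfold mm; rewrite S_INR; ring).
  assert (Hnn : nn = INR p + 1) by (unfold nn; rewrite S_INR; ring).
  pose proof (pos_INR q) as Hq0. pose proof (pos_INR p) as Hp0.
  set (h := 1 / mm).
  assert (Hh : 0 < h) by (unfold h; apply Rdiv_lt_0_compat; lra).
  assert (Hch := chasles G 0 h HG q).
  replace (0 + INR (S q) * h) with 1 in Hch by (fold mm; unfold h; field; lra).
  rewrite Hch.
  unfold I_nm. fold mm nn.
  rewrite <- sum_n_m_S.
  set (c := / (mm * (nn + 1))).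
  set (B := fun j => RInt G (0 + INR j * h) (0 + INR (S j) * h)).
  set (H := fun j : nat => sum_n_m (fun i => g ((INR (S j) * nn - nn + INR i) / (mm * nn))) 0 (S p)).
  change (sum_n_m (fun j => H j) 0 q) with (sum_n H q).
  assert (Hd := sum_sub B H c q).
  change (sum_n (fun j : nat => RInt G (0 + INR j * h) (0 + INR (S j) * h)) q) with (sum_n B q).
  apply Rle_trans with (Rabs (sum_n (fun j => B j - c * H j) q)). { right. f_equal. exact Hd. }
  eapply Rle_trans.
  apply (sum_abs_le _ (fun _ => M * h ^ 3 / (12 * nn))).
  - intros j Hj.
    assert (Hj' : INR (S j) <= mm) by (apply le_INR; lia).
    pose proof (pos_INR j) as Hj0.
    assert (Hb := block g g1 g2 M p (INR j * h) h HC HM ltac:(nra) Hh).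
    rewrite S_INR in Hj'.
    assert (Hle : INR j * h + h <= 1).
    { unfold h. replace (INR j * (1 / mm) + 1 / mm) with ((INR j + 1) / mm) by (field; lra).
      apply Rmult_le_reg_r with mm. lra. unfold Rdiv; rewrite Rmult_assoc, Rinv_l by lra. lra. }
    specialize (Hb Hle). fold nn in Hb.
    eapply Rle_trans; [|exact Hb]. right. f_equal.
    unfold B, H. rewrite S_INR.
    replace (0 + INR j * h) with (INR j * h) by ring.
    replace (0 + (INR j + 1) * h) with (INR j * h + h) by ring.
    f_equal.
    change (sum_n_m ?f 0 (S p)) with (sum_n f (S p)).
    f_equal. f_equal.
    + unfold c, h. field. lra.
    + apply sum_ext. intros i _. f_equal. unfold h. field. lra.
  - rewrite sum_const. fold mm. right. unfold h. rewrite <- Hmm. field. lra.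
Qed.
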